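(* Let $x_1,x_2,x_3>0$, $\gamma,\delta>0$ with $\gamma\ne1\ne\delta$, and let $$\mathbf{Q}=\begin{pmatrix}1&\delta x_1&x_2&x_3\\ 1/(\delta x_1)&1&x_2/x_1&x_3/x_1\\ 1/x_2&x_1/x_2&1&\gamma x_3/x_2\\ 1/x_3&x_1/x_3&x_2/(\gamma x_3)&1\end{pmatrix}$$ with principal right eigenvector $\mathbf{w}^{EM}$. Then $\gamma>1$ iff $w_3^{EM}/w_4^{EM}<\gamma x_3/x_2$, and $\gamma<1$ iff $w_3^{EM}/w_4^{EM}>\gamma x_3/x_2$.
   Context: The principal right eigenvector is the positive (Perron) eigenvector belonging to the largest eigenvalue. *)

(* Defs.v *)
From HB Require Import structures.
From mathcomp Require Import all_boot all_order all_algebra.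
Set Implicit Arguments. Unset Strict Implicit. Unset Printing Implicit Defensive.
Import Order.TTheory GRing.Theory Num.Theory.
Local Open Scope ring_scope.

(* The 4x4 matrix Q of the paper, indices 0..3 standing for 1..4. *)
Definition Qmat (R : realFieldType) (x1 x2 x3 g d : R) : 'M[R]_4 :=
  \matrix_(i < 4, j < 4)
    nth 0 (nth [::]
      [:: [:: 1; d * x1; x2; x3];
          [:: (d * x1)^-1; 1; x2 / x1; x3 / x1];
          [:: x2^-1; x1 / x2; 1; g * x3 / x2];
          [:: x3^-1; x1 / x3; x2 / (g * x3); 1]] i) j.

Definition principal_right_eigenvector (R : realFieldType) (n : nat)
    (A : 'M[R]_n) (w : 'cV[R]_n) : Prop :=
  (forall i, 0 < w i 0) /\
  exists lam : R, A *m w = lam *: w /\ (forall mu, eigenvalue A mu -> mu <= lam).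

(* Main.v *)
Require Import Defs.
From HB Require Import structures.
From mathcomp Require Import all_boot all_order all_algebra.
From mathcomp Require Import ring lra.
Import Order.TTheory GRing.Theory Num.Theory.
Local Open Scope ring_scope.

Theorem mainTheorem16 (R : realFieldType) (x1 x2 x3 g d : R)
  (hx1 : 0 < x1) (hx2 : 0 < x2) (hx3 : 0 < x3) (hg : 0 < g) (hd : 0 < d)
  (hg1 : g != 1) (hd1 : d != 1) (w : 'cV[R]_4)
  (hw : principal_right_eigenvector (Qmat x1 x2 x3 g d) w) :
  (1 < g <-> w (inord 2) 0 / w (inord 3) 0 < g * x3 / x2) /\
  (g < 1 <-> g * x3 / x2 < w (inord 2) 0 / w (inord 3) 0).
Proof.
case: hw => hpos [lam [Heq _]].
have e3 := congr1 (fun M : 'M[R]_(4,1) => M (inord 2) 0) Heq.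
have e4 := congr1 (fun M : 'M[R]_(4,1) => M (inord 3) 0) Heq.
rewrite /= !mxE !big_ord_recl big_ord0 !mxE /= in e3 e4.
rewrite !inordK // /= big_ord0 in e3 e4.
have I2 : (lift ord0 (lift ord0 ord0) : 'I_4) = inord 2 by apply/val_inj; rewrite /= inordK.
have I3 : (lift ord0 (lift ord0 (lift ord0 ord0)) : 'I_4) = inord 3 by apply/val_inj; rewrite /= inordK.
rewrite I2 I3 in e3 e4.
have h1 := hpos ord0; have h2 := hpos (lift ord0 ord0).
have h3 := hpos (inord 2); have h4 := hpos (inord 3).
move: e3 e4 h1 h2 h3 h4.
set w1 := w ord0 0; set w2 := w (lift ord0 ord0) 0; set w3 := w (inord 2) 0; set w4 := w (inord 3) 0.
move=> e3 e4 h1 h2 h3 h4.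
have x2n : x2 != 0 by rewrite gt_eqF.
have x3n : x3 != 0 by rewrite gt_eqF.
have gn : g != 0 by rewrite gt_eqF.
have E3 : w1 + x1*w2 + x2*w3 + g*(x3*w4) = lam*(x2*w3).
  by rewrite [RHS]mulrCA -e3; field.
have E4 : g*w1 + g*x1*w2 + x2*w3 + g*(x3*w4) = g*lam*(x3*w4).
  rewrite (_ : g*lam*(x3*w4) = g*x3*(lam*w4)); last by ring. rewrite -e4. field. by rewrite x3n gn.
move: E3 E4; set a := x2*w3; set b := x3*w4; move=> E3 E4.
have ha : 0 < a by rewrite mulr_gt0.
have hb : 0 < b by rewrite mulr_gt0.
set P := w1 + x1*w2.
have hP : 0 < P by rewrite addr_gt0 // mulr_gt0.
set mu := lam - 1.
have F1 : mu * a - g * b = P by rewrite /mu /P; lra.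
have F2 : g * mu * b - a = g * P by rewrite /mu /P; lra.
have hmu : 0 < mu by nra.
have G1 : (mu^+2 - 1) * a = P * (mu + g).
  transitivity (mu*(mu*a - g*b) + (g*mu*b - a)); first by ring.
  by rewrite F1 F2; ring.
have G2 : (mu^+2 - 1) * (g * b) = P * (g * mu + 1).
  transitivity (mu*(g*mu*b - a) + (mu*a - g*b)); first by ring.
  by rewrite F1 F2; ring.
have K : (mu^+2 - 1) * (a - g * b) = P * (mu - 1) * (1 - g).
  by rewrite mulrBr G1 G2; ring.
have hmu1 : 1 < mu.
  have : 0 < (mu^+2 - 1) * a by rewrite G1 mulr_gt0 // addr_gt0.
  rewrite pmulr_lgt0 // subr_gt0 => hm. 
  rewrite -(@ltr_pXn2r _ 2) ?expr1n ?nnegrE ?ltW //.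
have hd1' : 0 < mu^+2 - 1 by rewrite expr2; nra.
have hPm : 0 < P * (mu - 1) by rewrite mulr_gt0 // subr_gt0.
have S1 : (a - g*b < 0) = (1 < g).
  by rewrite -(pmulr_rlt0 _ hd1') K pmulr_rlt0 // subr_lt0.
have S2 : (0 < a - g*b) = (g < 1).
  by rewrite -(pmulr_rgt0 _ hd1') K pmulr_rgt0 // subr_gt0.
have Hr : (w3 / w4 < g * x3 / x2) = (a < g * b).
  by rewrite ltr_pdivlMr // mulrAC ltr_pdivrMr // /a /b mulrC mulrA.
have Hr2 : (g * x3 / x2 < w3 / w4) = (g * b < a).
  by rewrite ltr_pdivrMr // mulrAC ltr_pdivlMr // /a /b [w3 * x2]mulrC mulrA.
rewrite Hr Hr2 -S1 -S2 subr_lt0 subr_gt0.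
by split.
Qed.
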